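(* With $F_n$ as defined in the context, $$\int_{1+(\log n)^{-1}}^{\infty}F_n(w)\,dw=O(n\log\log n)\qquad(n\to\infty).$$
   Context: For $w>0$ and integer $n\ge1$ let $a_n(w)=\sum_{j=0}^n w^j$, $b_n(w)=\sum_{j=1}^n jw^j$, $c_n(w)=\sum_{j=0}^n j^2w^j$, and $$F_n(w)=\frac{1}{2\sqrt{w}}\sqrt{\frac{c_n(w)}{a_n(w)}}\sqrt{\frac{a_n(w)c_n(w)-b_n(w)^2}{w\,a_n(w)^2}}.$$ $\log$ is the natural logarithm. *)

(* Defs.v *)
From HB Require Import structures.
From mathcomp Require Import all_boot all_order all_algebra.
From mathcomp Require Import all_classical all_reals all_analysis.
Set Implicit Arguments. Unset Strict Implicit. Unset Printing Implicit Defensive.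
Import Order.TTheory GRing.Theory Num.Theory.
Local Open Scope ring_scope.

Section Defs.
Variable R : realType.

Definition an (n : nat) (w : R) : R := \sum_(0 <= j < n.+1) w ^+ j.
Definition bn (n : nat) (w : R) : R := \sum_(1 <= j < n.+1) j%:R * w ^+ j.
Definition cn (n : nat) (w : R) : R := \sum_(0 <= j < n.+1) (j%:R) ^+ 2 * w ^+ j.

Definition Fn (n : nat) (w : R) : R :=
  (2 * Num.sqrt w)^-1 * Num.sqrt (cn n w / an n w) *
  Num.sqrt ((an n w * cn n w - bn n w ^+ 2) / (w * an n w ^+ 2)).
End Defs.

(* Main.v *)
Require Import Defs.
From HB Require Import structures.
From mathcomp Require Import all_boot all_order all_algebra.
From mathcomp Require Import all_classical all_reals all_analysis.
From mathcomp Require Import ring lra.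
Import Order.TTheory GRing.Theory Num.Theory.
Import numFieldNormedType.Exports.
Local Open Scope ring_scope.
Local Open Scope classical_set_scope.
Section Alg.
Variable R : realType.

Lemma an_closed n (w : R) : (w - 1) * an n w = w ^+ n.+1 - 1.
Proof.
elim: n => [|n IH]; first by rewrite /an big_nat1; ring.
have -> : an n.+1 w = an n w + w ^+ n.+1 by rewrite /an big_nat_recr.
rewrite mulrDr IH [w ^+ n.+2]exprS; ring.
Qed.

Lemma bn_closed n (w : R) :
  (w - 1) ^+ 2 * bn n w = n%:R * w ^+ n.+2 - (n.+1)%:R * w ^+ n.+1 + w.
Proof.
elim: n => [|n IH]; first by rewrite /bn big_geq //; ring.
have -> : bn n.+1 w = bn n w + (n.+1)%:R * w ^+ n.+1 by rewrite /bn big_nat_recr.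
rewrite mulrDr IH [w ^+ n.+3]exprS [w ^+ n.+2]exprS -!natr1; ring.
Qed.

Lemma cn_closed n (w : R) : let P := w ^+ n.+1 in
  (w - 1) ^+ 3 * cn n w =
  ((w * P + P - ((n.+1)%:R * w - n%:R) ^+ 2 - w)
   - n%:R ^+ 2 * (w - 1) ^+ 2 * (P - 1)
   + 2 * n%:R * (w - 1) * (n%:R * w * P - (n.+1)%:R * P + w)).
Proof.
rewrite /=; elim: n => [|n IH]; first by rewrite /cn big_nat1; ring.
have -> : cn n.+1 w = cn n w + (n.+1)%:R ^+ 2 * w ^+ n.+1 by rewrite /cn big_nat_recr.
rewrite mulrDr IH [w ^+ n.+2]exprS -!natr1; ring.
Qed.

Lemma an_gt0 n (w : R) : 1 < w -> 2 <= w ^+ n.+1 -> 0 < an n w.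
Proof.
move=> w1 P2; have h := an_closed n w.
have : 0 < (w - 1) * an n w by rewrite h; lra.
by rewrite pmulr_rgt0 // subr_gt0.
Qed.

Lemma cn_le n (w : R) : 0 < w -> cn n w <= n%:R ^+ 2 * an n w.
Proof.
move=> w0; rewrite /cn /an mulr_sumr; apply: ler_sum_nat => j /andP[_ jn].
apply: ler_wpM2r; first exact/ltW/exprn_gt0.
apply: lerXn2r; rewrite ?nnegrE ?ler0n // ler_nat; by rewrite -ltnS.
Qed.

Lemma var_le n (w : R) : 1 < w -> 2 <= w ^+ n.+1 ->
  (an n w * cn n w - bn n w ^+ 2) * (w - 1) ^+ 2 <= 4 * (w * an n w ^+ 2).
Proof.
move=> w1 P2.
set a := an n w; set b := bn n w; set c := cn n w; set P := w ^+ n.+1.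
set m : R := n%:R.
have ha : (w - 1) * a = P - 1 by exact: an_closed.
have hb : (w - 1) ^+ 2 * b = m * w * P - (n.+1)%:R * P + w.
  by rewrite bn_closed exprS /P /m; ring.
have hc := cn_closed n w; rewrite -/a -/b -/c -/P in hc ha hb.
set D := m ^+ 2 * a - 2 * m * b + c.
have hD : (w - 1) ^+ 3 * D = (w + 1) * P - (((n.+1)%:R * w - m) ^+ 2 + w).
  rewrite /D mulrDr mulrBr hc.
  have -> : (w - 1) ^+ 3 * (2 * m * b) = 2 * m * (w - 1) * ((w - 1) ^+ 2 * b) by ring.
  have -> : (w - 1) ^+ 3 * (m ^+ 2 * a) = m ^+ 2 * (w - 1) ^+ 2 * ((w - 1) * a) by ring.
  rewrite hb ha /m; ring.
have a0 : 0 < a by exact: an_gt0.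
have w10 : 0 < w - 1 by lra.
have s1 : a * c - b ^+ 2 <= a * D.
  have -> : a * D = (a * c - b ^+ 2) + (m * a - b) ^+ 2 by rewrite /D; ring.
  by rewrite lerDl sqr_ge0.
have s2 : (w - 1) ^+ 2 * D <= 4 * w * a.
  rewrite -(ler_pM2l w10).
  have -> : (w - 1) * ((w - 1) ^+ 2 * D) = (w - 1) ^+ 3 * D by ring.
  rewrite hD.
  have K0 : 0 <= ((n.+1)%:R * w - m) ^+ 2 + w by rewrite addr_ge0 ?sqr_ge0 //; lra.
  have -> : (w - 1) * (4 * w * a) = 4 * w * ((w - 1) * a) by ring.
  have wP : w * 2 <= w * P by rewrite ler_wpM2l //; lra.
  rewrite ha; nra.
have := ler_wpM2r (sqr_ge0 (w - 1)) s1.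
have := ler_wpM2l (ltW a0) s2.
move=> h1 h2; apply: (le_trans h2); nra.
Qed.

Lemma Fn_bound n (w : R) : 1 < w -> 2 <= w ^+ n.+1 ->
  Fn n w <= n%:R / (Num.sqrt w * (w - 1)).
Proof.
move=> w1 P2; rewrite /Fn.
have a0 : 0 < an n w by exact: an_gt0.
have w0 : 0 < w by lra.
have w10 : 0 < w - 1 by lra.
have sw0 : 0 < Num.sqrt w by rewrite sqrtr_gt0.
have e1 : Num.sqrt (cn n w / an n w) <= n%:R.
  rewrite -[X in _ <= X](@ger0_norm _ (n%:R : R)) // -sqrtr_sqr ler_sqrt ?sqr_ge0 //.
  by rewrite ler_pdivrMr // cn_le.
have e2 : Num.sqrt ((an n w * cn n w - bn n w ^+ 2) / (w * an n w ^+ 2))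
           <= 2 / (w - 1).
  have h20 : 0 <= 2 / (w - 1) by rewrite divr_ge0 // ltW.
  rewrite -[X in _ <= X](@ger0_norm _ (2 / (w - 1))) //.
  rewrite -sqrtr_sqr ler_sqrt ?sqr_ge0 //.
  rewrite ler_pdivrMr ?mulr_gt0 ?exprn_gt0 //.
  rewrite expr_div_n mulrAC ler_pdivlMr ?exprn_gt0 //.
  have -> : (2:R) ^+ 2 = 4 by ring.
  exact: var_le.
apply: le_trans (_ : (2 * Num.sqrt w)^-1 * n%:R * (2 / (w - 1)) <= _).
  have i0 : 0 < (2 * Num.sqrt w)^-1 by rewrite invr_gt0 mulr_gt0.
  apply: ler_pM => //.
  - by rewrite ler_pM2l.
rewrite le_eqVlt; apply/orP; left; apply/eqP; field.
by rewrite !gt_eqF.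
Qed.

Lemma Fn_ge0 n (w : R) : 0 < w -> 0 <= Fn n w.
Proof.
move=> w0; rewrite /Fn mulr_ge0 ?sqrtr_ge0 // mulr_ge0 ?sqrtr_ge0 //.

Qed.
End Alg.
Section An.
Variable R : realType.

Lemma int_mono (D : set R) (f g : R -> \bar R) :
  (forall x, D x -> (0 <= f x)%E) -> (forall x, D x -> (f x <= g x)%E) ->
  (\int[@lebesgue_measure R]_(x in D) f x <= \int[@lebesgue_measure R]_(x in D) g x)%E.
Proof.
move=> f0 fg.
have g0 : forall x, D x -> (0 <= g x)%E by move=> x Dx; apply: le_trans (f0 x Dx) (fg x Dx).
rewrite !ge0_integralE //.
apply: ereal_sup_le => _ [h hf <-]; exists h => //= x.
apply: le_trans (hf x) _; exact: lee_restrict.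
Qed.

Definition G (n : nat) (w : R) : R :=
  n%:R * (ln (Num.sqrt w - 1) - ln (Num.sqrt w + 1)).
Definition gf (n : nat) (w : R) : R := n%:R / (Num.sqrt w * (w - 1)).

Lemma G_derive n (x : R) : 1 < x -> is_derive x 1 (G n) (gf n x).
Proof.
move=> x1.
have x0 : 0 < x by lra.
have s1 : 1 < Num.sqrt x by rewrite -sqrtr1 ltr_sqrt //; lra.
have d1 : is_derive x 1 (fun w => Num.sqrt w - 1) ((2 * Num.sqrt x)^-1 - 0).
  by apply: is_deriveB; exact: is_derive1_sqrt.
have d2 : is_derive x 1 (fun w => Num.sqrt w + 1) ((2 * Num.sqrt x)^-1 + 0).
  by apply: is_deriveD; exact: is_derive1_sqrt.
have l1 : is_derive x 1 (@ln R \o (fun w => Num.sqrt w - 1))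
   ((Num.sqrt x - 1)^-1 * ((2 * Num.sqrt x)^-1 - 0)).
  apply: is_derive1_comp => //; apply: is_derive1_ln; lra.
have l2 : is_derive x 1 (@ln R \o (fun w => Num.sqrt w + 1))
   ((Num.sqrt x + 1)^-1 * ((2 * Num.sqrt x)^-1 + 0)).
  apply: is_derive1_comp => //; apply: is_derive1_ln; lra.
have -> : G n = n%:R \*: ((@ln R \o (fun w => Num.sqrt w - 1)) - (@ln R \o (fun w => Num.sqrt w + 1))).
  by apply/funext => w; rewrite /G.
have h := is_deriveZ (n%:R : R) (is_deriveB l1 l2).
apply: (is_derive_eq h).
rewrite /gf.
set s := Num.sqrt x.
have sx : x = s ^+ 2 by rewrite /s sqr_sqrtr // ltW.
have E : (n%:R : R) * ((s - 1)^-1 * ((2 * s)^-1 - 0) - (s + 1)^-1 * ((2 * s)^-1 + 0))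
   = n%:R / (s * (x - 1)).
  rewrite sx; field.
  have s1p : 1 < s := s1. have s0 : 0 < s by lra.
  rewrite !gt_eqF ?subr_gt0 ?addr_gt0 //; nra.
exact: E.
Qed.

Lemma G_bound n (w : R) : 1 < w ->
  0 <= - G n w <= 2 * n%:R / (Num.sqrt w - 1).
Proof.
move=> w1.
have s1 : 1 < Num.sqrt w by rewrite -sqrtr1 ltr_sqrt //; lra.
set s := Num.sqrt w in s1 *.
have sm : 0 < s - 1 by lra.
have e : ln (s + 1) = ln (s - 1) + ln (1 + 2 / (s - 1)).
  rewrite -lnM ?posrE //; last by rewrite addr_gt0 // divr_gt0.
  congr ln; field; lra.
have l1 : ln (1 + 2 / (s - 1)) <= 2 / (s - 1) by apply: le_ln1Dx; rewrite (lt_le_trans _ (divr_ge0 _ (ltW sm))) //; lra.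
have l0 : 0 <= ln (1 + 2 / (s - 1)) by apply: ln_ge0; rewrite lerDl divr_ge0 // ltW.
rewrite /G -/s e.
have -> : - (n%:R * (ln (s - 1) - (ln (s - 1) + ln (1 + 2 / (s - 1)))))
   = n%:R * ln (1 + 2 / (s - 1)) by ring.
apply/andP; split; first by rewrite mulr_ge0.
rewrite mulrC -mulrA (mulrC n%:R) mulrA; apply: ler_wpM2r => //.
Qed.

Lemma G_lim n : G n x @[x --> +oo] --> 0.
Proof.
apply/cvgrPdist_le => e e0.
set M : R := (1 + 2 * n%:R / e) ^+ 2 + 1.
near=> w.
have hw : M < w by near: w; apply: nbhs_pinfty_gt; rewrite num_real.
have q0 : 0 <= 2 * n%:R / e by rewrite divr_ge0 // ltW.
have w1 : 1 < w by rewrite (le_lt_trans _ hw) // lerDr sqr_ge0.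
have [g0 gb] := andP (G_bound n w w1).
rewrite sub0r normrN ler0_norm ?oppr_le0 //; last by rewrite -oppr_ge0.
apply: le_trans gb _.
have s1 : 1 + 2 * n%:R / e < Num.sqrt w.
  rewrite -[X in X < _](@ger0_norm _ (1 + 2 * n%:R / e)); last by rewrite addr_ge0.
  rewrite -sqrtr_sqr ltr_sqrt; last by lra.
  by rewrite (lt_trans _ hw) // ltrDl.
have sm : 0 < Num.sqrt w - 1 by lra.
rewrite ler_pdivrMr //.
have : 2 * n%:R / e * e = 2 * n%:R by rewrite mulfVK // gt_eqF.
nra.
Unshelve. all: by end_near.
Qed.

Lemma gf_cont n (x : R) : 1 < x -> {for x, continuous (gf n)}.
Proof.
move=> x1.
have x0 : 0 < x by lra.
have c1 : {for x, continuous (fun w : R => Num.sqrt w * (w - 1))}.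
  apply: continuousM; first exact: sqrt_continuous.
  apply: continuousB; [exact: cvg_id | exact: cst_continuous].
have c2 : {for x, continuous (fun w : R => (Num.sqrt w * (w - 1))^-1)}.
  apply: continuousV => //; rewrite mulf_neq0 // gt_eqF ?sqrtr_gt0 ?subr_gt0 //.
apply: continuousM => //; exact: cst_continuous.
Qed.
End An.
Section Fin.
Variable R : realType.

Lemma bern (w : R) k : 1 <= w -> 1 + k%:R * (w - 1) <= w ^+ k.
Proof.
move=> w1; elim: k => [|k IH]; first by rewrite mul0r addr0 expr0.
rewrite exprS -natr1.
have : 0 <= k%:R * (w - 1) by rewrite mulr_ge0 ?ler0n // subr_ge0.
have : 1 + k%:R * (w - 1) <= w ^+ k := IH.
nra.
Qed.

Lemma expR2_le : expR (2 : R) <= 16.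
Proof.
have h1 : 1 + (- 2^-1) <= expR (- 2^-1 : R) by exact: expR_ge1Dx.
have h2 := expRxMexpNx_1 (2^-1 : R).
have p0 := expR_gt0 (2^-1 : R).
have h3 : expR (2^-1 : R) <= 2 by nra.
have -> : (2 : R) = 4%:R * 2^-1 by field.
rewrite expRM_natl.
have -> : (16 : R) = 2 ^+ 4 by rewrite -natrX.
by rewrite lerXn2r ?nnegrE ?(ltW p0).
Qed.

Lemma ln_ge2 n : (16 <= n)%N -> 2 <= ln (n%:R : R).
Proof.
move=> n16.
have n0 : (0 : R) < n%:R by rewrite ltr0n (leq_trans _ n16).
rewrite -[X in X <= _](expRK 2) ler_ln ?posrE ?expR_gt0 //.
apply: le_trans expR2_le _.
have -> : (16 : R) = 16%:R by [].
by rewrite ler_nat.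
Qed.
End Fin.

Arguments gf {R}.
Arguments G {R}.
Arguments bern {R}.
Arguments G_derive {R}.
Arguments G_lim {R}.
Arguments gf_cont {R}.

Theorem proposition3p3 (R : realType) :
  exists C : R, exists N : nat, forall n : nat, (N <= n)%N ->
    (\int[@lebesgue_measure R]_(w in `[(1 + (ln (n%:R : R))^-1)%R, +oo[%classic)
        (Fn n w)%:E <= (C * n%:R * ln (ln (n%:R : R)))%:E)%E.
Proof.
exists 4, 16%N => n n16.
have L2 : 2 <= ln (n%:R : R) by exact: ln_ge2.
set L := ln (n%:R : R) in L2 *.
have L0 : 0 < L by lra.
have iL0 : 0 < L^-1 by rewrite invr_gt0.
have iL2 : L^-1 <= 2^-1 by rewrite lef_pV2 ?posrE //; lra.
set a := 1 + L^-1.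
have a1 : 1 < a by rewrite /a; lra.
have Ln : L <= n%:R.
  rewrite ltW // /L ln_sublinear // ltr0n (leq_trans _ n16) //.
have step1 : (\int[@lebesgue_measure R]_(w in `[a, +oo[) (Fn n w)%:E <=
              \int[@lebesgue_measure R]_(w in `[a, +oo[) (gf n w)%:E)%E.
  apply: int_mono => x; rewrite /= in_itv /= andbT => ax.
    by rewrite lee_fin Fn_ge0 //; lra.
  rewrite lee_fin; apply: Fn_bound; first lra.
  apply: le_trans (bern x n.+1 _); last lra.
  have : 1 <= n.+1%:R * L^-1.
    by rewrite -ler_pdivrMr // div1r invrK -natr1; lra.
  have : L^-1 <= x - 1 by rewrite /a in ax; lra.
  have : 0 <= (n.+1)%:R :> R by [].
  nra.
have step2 : (\int[@lebesgue_measure R]_(w in `[a, +oo[) (gf n w)%:E =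
              0%:E - (G n a)%:E)%E.
  apply: ge0_continuous_FTC2y.
  - move=> x ax; rewrite /gf divr_ge0 // mulr_ge0 ?sqrtr_ge0 //; lra.
  - apply: continuous_in_subspaceT => x.
    rewrite inE /= in_itv /= andbT => ax; apply: gf_cont; lra.
  - exact: G_lim.
  - by move=> x ax; have [] := G_derive n x (lt_trans a1 ax).
  - apply: cvg_at_right_filter.
    apply: differentiable_continuous; apply/derivable1_diffP.
    by have [] := G_derive n a a1.
  - move=> x; rewrite in_itv /= andbT => ax.
    rewrite derive1E; have [_ ->] := G_derive n x (lt_trans a1 ax); done.
have step3 : - G n a <= 4 * n%:R * ln L.
  have sa : 1 < Num.sqrt a by rewrite -sqrtr1 ltr_sqrt //; lra.
  have sq : Num.sqrt a ^+ 2 = a by rewrite sqr_sqrtr // ltW // (lt_trans ltr01).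
  set s := Num.sqrt a in sa sq *.
  have sm : 0 < s - 1 by lra.
  have h1 : (s - 1) * (s + 1) * L = 1.
    have -> : (s - 1) * (s + 1) = s ^+ 2 - 1 by ring.
    by rewrite sq /a addrAC subrr add0r mulVf // gt_eqF.
  have s32 : s <= 3 / 2 by rewrite /a in sq; nra.
  have L3 : 8 <= L ^+ 3.
    have -> : (8 : R) = 2 ^+ 3 by rewrite -natrX.
    by rewrite lerXn2r ?nnegrE // ltW.
  have key : s + 1 <= (s - 1) * L ^+ 4.
    rewrite -(ler_pM2r (_ : 0 < s + 1)); last lra.
    have -> : (s - 1) * L ^+ 4 * (s + 1) = L ^+ 3 * ((s - 1) * (s + 1) * L) by ring.
    rewrite h1 mulr1; nra.
  have lk : ln (s + 1) <= ln (s - 1) + 4 * ln L.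
    rewrite -[4]/(4%:R) mulr_natl -lnXn // -lnM ?posrE ?exprn_gt0 //.
    by rewrite ler_ln ?posrE ?mulr_gt0 ?exprn_gt0 //; lra.
  rewrite /G -/s.
  have -> : - (n%:R * (ln (s - 1) - ln (s + 1))) = n%:R * (ln (s + 1) - ln (s - 1)) by ring.
  have -> : 4 * n%:R * ln L = n%:R * (4 * ln L) by ring.
  by apply: ler_wpM2l => //; lra.
apply: le_trans step1 _; rewrite step2 -EFinB lee_fin; lra.
Qed.
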